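(* Let $p=(p_1,p_2,\dots)$ be a probability distribution on the positive integers with infinite support, and let integers $n \geq 0$ and $k \geq 1$ be given. Throw $n$ balls independently into countably many bins indexed by positive integers, each ball landing in bin $i$ with probability $p_i$, and let $M_n$ be the maximum load of any bin. Let $\|p\|_k = \left(\sum_{i=1}^\infty p_i^k\right)^{1/k}$. Then \[ \Pr[\mathrm{Bin}(n, \|p\|_k) \geq k] \;\leq\; \Pr[M_n \geq k] \;\leq\; \binom{n}{k}\|p\|_k^{k}. \]
   Context: $\mathrm{Bin}(n,\alpha)$ denotes a binomial random variable with $n$ trials and success probability $\alpha$. The load of a bin is the number of balls that landed in it. *)

(* Defs.v *)
From HB Require Import structures.
From mathcomp Require Import all_boot all_order all_algebra.
From mathcomp Require Import all_classical all_reals all_analysis.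
Set Implicit Arguments. Unset Strict Implicit. Unset Printing Implicit Defensive.
Import Order.TTheory GRing.Theory Num.Theory.
Import numFieldNormedType.Exports.
Local Open Scope classical_set_scope.
Local Open Scope ring_scope.

(* Bins are indexed by nat (bin i here = bin i+1 of the paper).
   An outcome of throwing n balls is f : {ffun 'I_n -> nat}, f j = bin of ball j. *)

Definition load (n : nat) (f : {ffun 'I_n -> nat}) (b : nat) : nat :=
  #|[set j : 'I_n | f j == b]|.

(* maximum load M_n (0 when n = 0): max over occupied bins *)
Definition maxload (n : nat) (f : {ffun 'I_n -> nat}) : nat :=
  \max_(j : 'I_n) load f (f j).

Definition outcome_mass (R : realType) (p : nat -> R) (n : nat)
  (f : {ffun 'I_n -> nat}) : R := \prod_(j : 'I_n) p (f j).

Definition prob_maxload_ge (R : realType) (p : nat -> R) (n k : nat) : \bar R :=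
  (\esum_(f in [set f : {ffun 'I_n -> nat} | (k <= maxload f)%N])
      (outcome_mass p f)%:E)%E.

Definition pnorm (R : realType) (p : nat -> R) (k : nat) : R :=
  powR (limn (series (fun i => p i ^+ k))) (k%:R^-1).

Definition binom_tail_ge (R : realType) (n : nat) (q : R) (k : nat) : R :=
  \sum_(k <= j < n.+1) ('C(n, j)%:R * q ^+ j * (1 - q) ^+ (n - j)).

(* Main.v *)
Require Import Defs.
From HB Require Import structures.
From mathcomp Require Import all_boot all_order all_algebra.
From mathcomp Require Import all_classical all_reals all_analysis.
From mathcomp Require Import ring lra zify.
Import Order.TTheory GRing.Theory Num.Theory.
Import numFieldNormedType.Exports.
Local Open Scope classical_set_scope.
Local Open Scope ring_scope.
Section Alg.
Variable R : realType.
Variable k : nat.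
Hypothesis k0 : (0 < k)%N.

Definition Vt (m : nat) (a b : R) :=
  \sum_(0 <= j < k) ('C(m, j))%:R * a ^+ j * b ^+ (m - j).
Definition Ut (m : nat) (a b : R) :=
  \sum_(k <= j < m.+1) ('C(m, j))%:R * a ^+ j * b ^+ (m - j).

Lemma binexp m (a b : R) :
  (a + b) ^+ m = \sum_(0 <= j < m.+1) ('C(m, j))%:R * a ^+ j * b ^+ (m - j).
Proof.
rewrite addrC exprDn big_mkord; apply: eq_bigr => i _.
by rewrite -mulr_natl; ring.
Qed.

Lemma sum_trunc (m K : nat) (f : nat -> R) :
  (forall i, (m < i)%N -> f i = 0) ->
  \sum_(0 <= i < m.+1) (i < K)%:R * f i = \sum_(0 <= i < K) f i.
Proof.
move=> f0; case: (leqP K m.+1) => hK.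
  rewrite (big_cat_nat (leq0n K) hK) /= [X in _ + X]big1_seq ?addr0.
    by apply: eq_big_nat => i /andP[_ ->]; rewrite mul1r.
  by move=> i /andP[_]; rewrite mem_index_iota => /andP[h _]; rewrite ltnNge h mul0r.
rewrite [RHS](big_cat_nat (leq0n m.+1) (ltnW hK)) /= [X in _ = _ + X]big1_seq ?addr0.
  apply: eq_big_nat => i /andP[_ h]; rewrite (leq_trans h (ltnW hK)) mul1r //.
by move=> i /andP[_]; rewrite mem_index_iota => /andP[h _]; apply: f0.
Qed.

Lemma sum_from (m K : nat) (f : nat -> R) :
  \sum_(K <= i < m.+1) f i = \sum_(0 <= i < m.+1) (K <= i)%:R * f i.
Proof.
case: (leqP K m.+1) => hK.
  rewrite [RHS](big_cat_nat (leq0n K) hK) /= [X in _ = X + _]big1_seq ?add0r.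
    by apply: eq_big_nat => i /andP[-> _]; rewrite mul1r.
  by move=> i /andP[_]; rewrite mem_index_iota => /andP[_ h]; rewrite leqNgt h mul0r.
rewrite big_geq ?(ltnW hK) // big1_seq // => i /andP[_]; rewrite mem_index_iota => /andP[_ h].
by rewrite leqNgt (leq_trans h (ltnW hK)) mul0r.
Qed.

Lemma VU m a b : Vt m a b + Ut m a b = (a + b) ^+ m.
Proof.
rewrite binexp /Vt /Ut; case: (leqP k m.+1) => hk.
  by rewrite -big_cat_nat.
rewrite (@big_geq _ _ _ k m.+1) ?(ltnW hk) // addr0.
rewrite (big_cat_nat (leq0n m.+1) (ltnW hk)) /= [X in _ + X]big1_seq ?addr0 //.
by move=> i /andP[_]; rewrite mem_index_iota => /andP[h _]; rewrite bin_small // !mul0r.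
Qed.

Lemma V_rec m a b : Vt m.+1 a b =
  (a + b) * Vt m a b - ('C(m, k.-1))%:R * a ^+ k * b ^+ (m.+1 - k).
Proof.
have [k' hk] : exists k', k = k'.+1 by exists k.-1; rewrite prednK.
have E1 : b * Vt m a b = b ^+ m.+1 + \sum_(0 <= i < k')
    ('C(m, i.+1))%:R * a ^+ i.+1 * b ^+ (m.+1 - i.+1).
  rewrite /Vt hk big_nat_recl // mulrDr bin0 subn0 expr0 mul1r mul1r exprS; congr (_ + _).
  rewrite mulr_sumr; apply: eq_big_nat => i _ /=.
  case: (leqP i.+1 m) => h.
    by rewrite (subSn h) [b ^+ (_.+1)]exprS; ring.
  by rewrite bin_small // !mul0r mulr0.
have E2 : a * Vt m a b = \sum_(0 <= i < k')
    ('C(m, i))%:R * a ^+ i.+1 * b ^+ (m.+1 - i.+1) + ('C(m, k.-1))%:R * a ^+ k * b ^+ (m.+1 - k).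
  rewrite /Vt hk big_nat_recr //= mulrDr mulr_sumr /=; congr (_ + _).
    by apply: eq_big_nat => i _ /=; rewrite subSS exprS; ring.
  by rewrite subSS exprS; ring.
rewrite {1}/Vt hk big_nat_recl //.
under eq_bigr do rewrite binS natrD mulrDl mulrDl.
rewrite big_split /= bin0 subn0 expr0 mul1r mul1r.
rewrite mulrDl E1 E2 hk /=; ring.
Qed.

Lemma U_rec m a b : Ut m.+1 a b =
  (a + b) * Ut m a b + ('C(m, k.-1))%:R * a ^+ k * b ^+ (m.+1 - k).
Proof.
have h1 := VU m.+1 a b; have h2 := VU m a b; rewrite V_rec exprS in h1.
rewrite -h2 in h1.
apply: (addrI ((a + b) * Vt m a b - ('C(m, k.-1))%:R * a ^+ k * b ^+ (m.+1 - k))).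
rewrite h1; ring.
Qed.

Fixpoint Gt (m : nat) (b s : R) : R :=
  if m is m'.+1 then s * Gt m' b s + ('C(m', k.-1))%:R * b ^+ (m'.+1 - k) else 0.

Lemma UG m a b : Ut m a b = a ^+ k * Gt m b (a + b).
Proof.
elim: m => [|m IH].
  by rewrite /Ut big_geq // mulr0.
rewrite U_rec IH /=; ring.
Qed.

Lemma G_mono m b b' s : 0 <= b -> b <= b' -> 0 <= s ->
  0 <= Gt m b s /\ Gt m b s <= Gt m b' s.
Proof.
move=> b0 bb s0; elim: m => [|m [IH1 IH2]] /=; first by split.
have h1 : 0 <= b ^+ (m.+1 - k) by apply: exprn_ge0.
have h2 : b ^+ (m.+1 - k) <= b' ^+ (m.+1 - k) by apply: lerXn2r => //; rewrite nnegrE (le_trans b0 bb).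
have hc : (0 : R) <= ('C(m, k.-1))%:R by [].
split; first by apply: addr_ge0; [apply: mulr_ge0|apply: mulr_ge0].
apply: lerD; first by apply: ler_wpM2l.
by apply: ler_wpM2l.
Qed.


Lemma powD_ge (x z : R) : 0 <= x -> 0 <= z -> x ^+ k + z ^+ k <= (x + z) ^+ k.
Proof.
move=> x0 z0; case: k k0 => // k' _; elim: k' => [|k' IH]; first by rewrite !expr1.
rewrite (exprS x) (exprS z) (exprS (x + z)).
apply: (le_trans _ (ler_wpM2l (addr_ge0 x0 z0) IH)).
have h1 : 0 <= x ^+ k'.+1 := exprn_ge0 _ x0.
have h2 : 0 <= z ^+ k'.+1 := exprn_ge0 _ z0.
have h3 : 0 <= x * z ^+ k'.+1 := mulr_ge0 x0 h2.
have h4 : 0 <= z * x ^+ k'.+1 := mulr_ge0 z0 h1.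
rewrite mulrDl !mulrDr -!addrA lerD2l addrA -[X in X <= _]add0r lerD2r; exact: addr_ge0.
Qed.

Lemma rootle (x y : R) : 0 <= x -> 0 <= y -> x ^+ k <= y ^+ k -> x <= y.
Proof. by move=> x0 y0; rewrite ler_pXn2r. Qed.

Definition Lt m (a c : R) := \sum_(0 <= j < m.+1)
  ((j < k)%N && (m - j < k)%N)%:R * (('C(m, j))%:R * a ^+ j * c ^+ (m - j)).

Lemma U_as m a c : Ut m a c =
  \sum_(0 <= j < m.+1) (k <= j)%N%:R * (('C(m, j))%:R * a ^+ j * c ^+ (m - j)).
Proof. by rewrite /Ut sum_from. Qed.

Lemma U_rev m a c : Ut m c a =
  \sum_(0 <= j < m.+1) (k <= m - j)%N%:R * (('C(m, j))%:R * a ^+ j * c ^+ (m - j)).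
Proof.
rewrite U_as big_nat_rev /=; apply: eq_big_nat => j /andP[_ hj].
rewrite add0n subSS (bin_sub (ltnSE hj)) (subKn (ltnSE hj)); ring.
Qed.

Lemma Lt_eq m a c : (m.+1 < k + k)%N ->
  Lt m a c + Ut m a c + Ut m c a = (a + c) ^+ m.
Proof.
move=> hm; rewrite U_as U_rev binexp /Lt -!big_split /=.
apply: eq_big_nat => j /andP[_ hj].
rewrite -!mulrDl.
have -> : ((j < k)%N && (m - j < k)%N)%:R + (k <= j)%N%:R + (k <= m - j)%N%:R = (1 : R).
  rewrite (leqNgt k j) (leqNgt k (m - j)); case h1: (j < k)%N; case h2: (m - j < k)%N;
    rewrite /= ?(mulr0n, mulr1n, add0r, addr0) //.
  exfalso; move/negbT: h1; move/negbT: h2; rewrite -!ltnNge; lia.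
by rewrite mul1r.
Qed.


Lemma lin1 (a c c' : R) : c' <= a + c -> a <= c' -> c <= c' ->
  0 <= a + c - c' /\ a + c - c' <= a /\ a + c - c' <= c.
Proof. move=> *; split; [lra|split; lra]. Qed.

Lemma lin2 (L U1 U2 S V U' : R) : L + U1 + U2 = S -> V + U' = S -> U' <= U1 + U2 -> L <= V.
Proof. move=> *; lra. Qed.

Lemma Lt_le m a c c' : 0 <= a -> 0 <= c -> 0 <= c' ->
  c' ^+ k = a ^+ k + c ^+ k ->
  Lt m a c <= Vt m c' (a + c - c').
Proof.
move=> a0 c0 c'0 hc.
have hac : c' <= a + c by apply: rootle => //; [exact: addr_ge0|rewrite hc; apply: powD_ge].
have hca : a <= c' by apply: rootle => //; rewrite hc lerDl exprn_ge0.
have hcc : c <= c' by apply: rootle => //; rewrite hc lerDr exprn_ge0.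
have [hx0 [hxa hxc]] := lin1 _ _ _ hac hca hcc.
have s0 : 0 <= a + c := addr_ge0 a0 c0.
case: (ltnP m.+1 (k + k)) => hm.
  have e1 := Lt_eq m a c hm; have e2 := VU m c' (a + c - c').
  have E : c' + (a + c - c') = a + c by ring.
  rewrite E in e2.
  have key : Ut m c' (a + c - c') <= Ut m a c + Ut m c a.
    rewrite !UG E.
    have -> : c + a = a + c by ring.
    rewrite hc mulrDl.
    have [g0 g1] := G_mono m _ _ _ hx0 hxc s0.
    have [_ g2] := G_mono m _ _ _ hx0 hxa s0.
    apply: lerD; apply: ler_wpM2l => //; exact: exprn_ge0.
  exact: lin2 _ _ _ _ _ _ e1 e2 key.
rewrite /Lt big1_seq.
  rewrite /Vt sumr_ge0 // => i _; apply: mulr_ge0; first apply: mulr_ge0 => //.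
    exact: exprn_ge0.
  exact: exprn_ge0.
move=> j /andP[_]; rewrite mem_index_iota => /andP[_ hj].
case h1: (j < k)%N; case h2: (m - j < k)%N; rewrite /= ?mul0r //.
exfalso; lia.
Qed.

Lemma binM (n j i : nat) : (j + i <= n)%N ->
  ('C(n, j) * 'C(n - j, i) = 'C(n, j + i) * 'C(j + i, j))%N.
Proof.
move=> h.
have f1 := @bin_fact n j ltac:(lia).
have f2 := @bin_fact (n - j) i ltac:(lia).
have f3 := @bin_fact n (j + i) h.
have f4 := @bin_fact (j + i) j ltac:(lia).
rewrite addKn in f4; rewrite -subnDA in f2.
apply/eqP; rewrite -(@eqn_pmul2r (j`! * i`! * (n - (j + i))`!)); last by rewrite !muln_gt0 !fact_gt0.
apply/eqP; transitivity (n`!).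
  rewrite -f1 -f2; ring.
rewrite -f3 -f4; ring.
Qed.

Lemma regroup n (F : nat -> nat -> R) :
 \sum_(0 <= j < n.+1) \sum_(0 <= i < (n - j).+1) ('C(n, j) * 'C(n - j, i))%N%:R * F j i =
 \sum_(0 <= m < n.+1) \sum_(0 <= j < m.+1) ('C(n, m) * 'C(m, j))%N%:R * F j (m - j)%N.
Proof.
have -> : \sum_(0 <= m < n.+1) \sum_(0 <= j < m.+1) ('C(n, m) * 'C(m, j))%N%:R * F j (m - j)%N
  = \sum_(0 <= m < n.+1) \sum_(0 <= j < n.+1) ('C(n, m) * 'C(m, j))%N%:R * F j (m - j)%N.
  apply: eq_big_nat => m /andP[_ hm].
  rewrite [RHS](big_cat_nat (leq0n m.+1) hm) /= [X in _ = _ + X]big1_seq ?addr0 //.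
  move=> j /andP[_]; rewrite mem_index_iota => /andP[hj _].
  by rewrite (bin_small hj) muln0 mul0r.
rewrite exchange_big_nat /=; apply: eq_big_nat => j /andP[_ hj].
rewrite [RHS](big_cat_nat (leq0n j) (ltnW hj)) /= [X in _ = X + _]big1_seq ?add0r; last first.
  move=> m /andP[_]; rewrite mem_index_iota => /andP[_ hm].
  by rewrite (bin_small hm) muln0 mul0r.
have := big_addn 0 n.+1 j xpredT (fun m => ('C(n, m) * 'C(m, j))%N%:R * F j (m - j)%N).
rewrite add0n => ->.
rewrite (subSn (ltnSE hj)); apply: eq_big_nat => i /andP[_ hi].
by rewrite addnK addnC binM //; lia.
Qed.

Lemma TB n (a c e c' : R) : 0 <= a -> 0 <= c -> 0 <= e -> 0 <= c' ->
  c' ^+ k = a ^+ k + c ^+ k ->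
  \sum_(0 <= j < k) ('C(n, j))%:R * a ^+ j * Vt (n - j) c e
    <= Vt n c' (a + c - c' + e).
Proof.
move=> a0 c0 e0 c'0 hc.
have EL : \sum_(0 <= j < k) ('C(n, j))%:R * a ^+ j * Vt (n - j) c e =
   \sum_(0 <= m < n.+1) ('C(n, m))%:R * e ^+ (n - m) * Lt m a c.
  rewrite -(@sum_trunc n k); last by move=> i hi; rewrite bin_small // !mul0r.
  transitivity (\sum_(0 <= j < n.+1) \sum_(0 <= i < (n - j).+1)
     ('C(n, j) * 'C(n - j, i))%N%:R *
     (((j < k)%N && (i < k)%N)%:R * (a ^+ j * c ^+ i * e ^+ (n - j - i)))).
    apply: eq_big_nat => j _.
    rewrite /Vt -(@sum_trunc (n - j) k); last by move=> i hi; rewrite bin_small // !mul0r.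
    rewrite mulrA mulr_sumr; apply: eq_big_nat => i _ /=.
    rewrite natrM -mulnb natrM; ring.
  rewrite regroup; apply: eq_big_nat => m /andP[_ hm].
  rewrite /Lt mulr_sumr; apply: eq_big_nat => j /andP[_ hj] /=.
  have -> : (n - j - (m - j) = n - m)%N by lia.
  rewrite natrM; ring.
have ER : Vt n c' (a + c - c' + e) =
   \sum_(0 <= m < n.+1) ('C(n, m))%:R * e ^+ (n - m) * Vt m c' (a + c - c').
  rewrite /Vt -(@sum_trunc n k); last by move=> i hi; rewrite bin_small // !mul0r.
  transitivity (\sum_(0 <= i < n.+1) \sum_(0 <= l < (n - i).+1)
     ('C(n, i) * 'C(n - i, l))%N%:R *
     ((i < k)%N%:R * (c' ^+ i * (a + c - c') ^+ l * e ^+ (n - i - l)))).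
    apply: eq_big_nat => i _.
    rewrite binexp mulrA mulr_sumr; apply: eq_big_nat => l _ /=.
    rewrite natrM; ring.
  rewrite regroup; apply: eq_big_nat => m /andP[_ hm].
  rewrite -(@sum_trunc m k); last by move=> i hi; rewrite bin_small // !mul0r.
  rewrite mulr_sumr; apply: eq_big_nat => j /andP[_ hj] /=.
  have -> : (n - j - (m - j) = n - m)%N by lia.
  rewrite natrM; ring.
rewrite EL ER; apply: ler_sum_nat => m _.
apply: ler_wpM2l; first by apply: mulr_ge0 => //; exact: exprn_ge0.
exact: Lt_le.
Qed.

End Alg.

Section Comb.
Variable R : realType.
Variable k : nat.
Hypothesis k0 : (0 < k)%N.
Variables (I B : finType) (b0 : B) (w : B -> R).
Hypothesis w0 : forall b, 0 <= w b.

Definition valid (A : {set I}) (Bs : {set B}) (g : {ffun I -> B}) : bool :=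
  [forall j, if j \in A then g j \in Bs else g j == b0].
Definition okl (A : {set I}) (Bs : {set B}) (g : {ffun I -> B}) : bool :=
  [forall b in Bs, #|[set j in A | g j == b]| < k]%N.
Definition Ssum (A : {set I}) (Bs : {set B}) : R :=
  \sum_(g | valid A Bs g) (\prod_(j in A) w (g j)) * (okl A Bs g)%:R.

Definition upf (T : {set I}) (v : B) (g : {ffun I -> B}) : {ffun I -> B} :=
  [ffun j => if j \in T then v else g j].

Lemma fwd_valid (A T : {set I}) (Bs : {set B}) b g' :
  valid A (b |: Bs) (upf T b g') -> [set j in A | upf T b g' j == b] == T ->
  upf T b0 (upf T b g') == g' -> valid (A :\: T) Bs g'.
Proof.
move=> hv /eqP hk /eqP hd.
have gT j : j \in T -> g' j = b0 by move=> jT; rewrite -hd !ffunE jT.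
apply/forallP => j; rewrite inE.
case: (boolP (j \in T)) => jT /=; first by rewrite gT // eqxx.
have := forallP hv j; rewrite !ffunE (negbTE jT).
case: ifP => jA //.
rewrite in_setU1 => /orP[/eqP gb|//].
by move/setP: hk => /(_ j); rewrite !inE jA (negbTE jT) !ffunE (negbTE jT) gb eqxx.
Qed.

Lemma okl_up (A T : {set I}) (Bs : {set B}) b g' : b \notin Bs -> T \subset A ->
  (#|T| < k)%N -> valid (A :\: T) Bs g' ->
  okl A (b |: Bs) (upf T b g') = okl (A :\: T) Bs g'.
Proof.
move=> bBs TA Tk hv'.
have key b' : b' \in Bs -> [set j in A | upf T b g' j == b'] = [set j in A :\: T | g' j == b'].
  move=> hb'; have hbb : b != b' by apply: contraNneq bBs => ->.
  apply/setP => j; rewrite !inE ffunE; case: (boolP (j \in T)) => jT /=.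
    by rewrite (negbTE hbb) andbF.
  by [].
have kT : [set j in A | upf T b g' j == b] = T.
  apply/setP => j; rewrite inE ffunE; case: (boolP (j \in T)) => jT.
    by rewrite eqxx andbT (fintype.subsetP TA).
  have := forallP hv' j; rewrite inE jT /=; case: (boolP (j \in A)) => jA //= hg.
  by apply/negbTE; apply: contra bBs => /eqP <-.
apply/idP/idP.
- move=> /forall_inP h; apply/forall_inP => b' hb'.
  by have := h b' (setU1r b hb'); rewrite key.
- move=> /forall_inP h; apply/forall_inP => b'; rewrite in_setU1 => /orP[/eqP -> | hb'].
    by rewrite kT.
  by rewrite key //; apply: h.
Qed.

Lemma step_T (A T : {set I}) (Bs : {set B}) b : b \notin Bs -> T \subset A -> (#|T| < k)%N ->
  \sum_(g | valid A (b |: Bs) g && ([set j in A | g j == b] == T))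
     (\prod_(j in A) w (g j)) * (okl A (b |: Bs) g)%:R =
  w b ^+ #|T| * Ssum (A :\: T) Bs.
Proof.
move=> bBs TA Tk.
rewrite /Ssum mulr_sumr.
rewrite (reindex_onto (upf T b) (upf T b0)); last first.
  move=> g /andP[_ /eqP hT]; apply/ffunP => j; rewrite !ffunE.
  case: ifP => jT; last by rewrite jT.
  by move: jT; rewrite -hT inE => /andP[_ /eqP ->].
apply: eq_big => g'.
  apply/idP/idP.
  - by move=> /andP[/andP[hv hk] hd]; apply: fwd_valid _ _ _ _ _ hv hk hd.
  - move=> hv; apply/andP; split; first (apply/andP; split).
    + apply/forallP => j; rewrite !ffunE; have := forallP hv j; rewrite inE.
      case: (boolP (j \in T)) => jT /=.
        by rewrite (fintype.subsetP TA j jT) setU11.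
      case: ifP => jA //= hg; by rewrite in_setU1 hg orbT.
    + apply/eqP/setP => j; rewrite !inE !ffunE; have := forallP hv j; rewrite inE.
      case: (boolP (j \in T)) => jT /=; first by rewrite (fintype.subsetP TA j jT) eqxx.
      case: ifP => jA //= hg; apply/negbTE; apply: contra bBs => /eqP <-; exact: hg.
    + apply/eqP/ffunP => j; rewrite !ffunE; have := forallP hv j; rewrite inE.
      by case: (boolP (j \in T)) => jT //= /eqP.
move=> /andP[/andP[hv hk] hd].
have hv' := fwd_valid _ _ _ _ _ hv hk hd.
rewrite (big_setID T) /= (finset.setIidPr TA).
have -> : \prod_(i in T) w (upf T b g' i) = w b ^+ #|T|.
  rewrite (eq_bigr (fun=> w b)) ?prodr_const // => j jT; by rewrite ffunE jT.
have -> : \prod_(i in A :\: T) w (upf T b g' i) = \prod_(i in A :\: T) w (g' i).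
  by apply: eq_bigr => j; rewrite inE => /andP[/negbTE jT _]; rewrite ffunE jT.
by rewrite okl_up // mulrA.
Qed.

Lemma step (A : {set I}) (Bs : {set B}) b : b \notin Bs ->
  Ssum A (b |: Bs) = \sum_(T : {set I} | (T \subset A) && (#|T| < k)%N)
     w b ^+ #|T| * Ssum (A :\: T) Bs.
Proof.
move=> bBs.
rewrite {1}/Ssum (partition_big (fun g : {ffun I -> B} => [set j in A | g j == b]) xpredT) //=.
rewrite [RHS]big_mkcond /=; apply: eq_bigr => T _.
case h: ((T \subset A) && (#|T| < k)%N).
  by move/andP: h => [TA Tk]; apply: step_T.
apply: big1 => g /andP[hv /eqP hk].
have TA : T \subset A by rewrite -hk; apply/fintype.subsetP => j; rewrite inE => /andP[].
rewrite TA /= in h.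
have -> : okl A (b |: Bs) g = false.
  apply/negbTE/forall_inP => H; have := H b (setU11 b Bs); by rewrite hk h.
by rewrite mulr0.
Qed.

Lemma base (A : {set I}) : Ssum A finset.set0 <= (#|A| == 0)%N%:R.
Proof.
case: (set_0Vmem A) => [-> | [j jA]].
  rewrite cards0 /= /Ssum (big_pred1 [ffun=> b0]); last first.
    move=> g /=; apply/forallP/eqP => [h|->].
      by apply/ffunP => j; rewrite ffunE; have := h j; rewrite finset.in_set0 => /eqP.
    by move=> j; rewrite finset.in_set0 ffunE eqxx.
  by rewrite big_set0 mul1r; case: (okl _ _ _).
rewrite /Ssum big_pred0; first by rewrite ler0n.
move=> g; apply/negbTE/forallP => /(_ j); by rewrite jA finset.in_set0.
Qed.

Lemma sum_pow_le (Bs : {set B}) :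
  \sum_(b in Bs) w b ^+ k <= (\sum_(b in Bs) w b) ^+ k.
Proof.
have : 0 <= \sum_(b in Bs) w b /\ \sum_(b in Bs) w b ^+ k <= (\sum_(b in Bs) w b) ^+ k.
  apply: (big_ind2 (fun x y => 0 <= y /\ x <= y ^+ k)).
  - by split => //; rewrite expr0n gtn_eqF.
  - move=> x1 x2 y1 y2 [h1 h2] [h3 h4]; split; first exact: addr_ge0.
    apply: le_trans (powD_ge _ _ k0 _ _ h1 h3); exact: lerD.
  - by move=> b _; split.
by case.
Qed.

Lemma Vt_ge0 m (a b : R) : 0 <= a -> 0 <= b -> 0 <= Vt R k m a b.
Proof.
move=> a0 b0'; rewrite /Vt; apply: sumr_ge0 => i _.
by apply: mulr_ge0; [apply: mulr_ge0|]; rewrite ?exprn_ge0.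
Qed.

Lemma Vt000 : Vt R k 0 0 (0 - 0) = 1.
Proof.
rewrite /Vt subrr; case: k k0 => // k' _.
rewrite big_nat_recl // big1_seq ?addr0; first by rewrite bin0 !expr0 !mulr1.
by move=> j _; rewrite bin0n mul0r mul0r.
Qed.

Lemma rootK (x : R) : 0 <= x -> (x `^ (k%:R^-1)) ^+ k = x.
Proof.
move=> x0; rewrite -powR_mulrn ?powR_ge0 // -powRrM mulVf ?powRr1 //.
by rewrite pnatr_eq0 -lt0n.
Qed.

Lemma sum_ind (t K : nat) (G : nat -> R) : (t < K)%N ->
  \sum_(0 <= j < K) (t == j)%:R * G j = G t.
Proof.
move=> h; rewrite (big_cat_nat (leq0n t) (ltnW h)) /= [X in _ + X](big_ltn h) eqxx mul1r.
rewrite big1_seq ?add0r; last first.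
  move=> j /andP[_]; rewrite mem_index_iota => /andP[_ hj].
  by rewrite (gtn_eqF hj) mul0r.
rewrite big1_seq ?addr0 // => j /andP[_]; rewrite mem_index_iota => /andP[hj _].
by rewrite (ltn_eqF hj) mul0r.
Qed.

Lemma count_sub (A : {set I}) (G : nat -> R) :
  \sum_(T : {set I} | (T \subset A) && (#|T| < k)%N) G #|T| =
  \sum_(0 <= j < k) ('C(#|A|, j))%:R * G j.
Proof.
transitivity (\sum_(T : {set I} | T \subset A) \sum_(0 <= j < k) (#|T| == j)%:R * G j).
  rewrite [RHS](bigID (fun T : {set I} => (#|T| < k)%N)) /= [X in _ = _ + X]big1 ?addr0.
    by apply: eq_bigr => T /andP[_ hT]; rewrite sum_ind.
  move=> T /andP[_ hT]; rewrite big1_seq // => j /andP[_]; rewrite mem_index_iota => /andP[_ hj].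
  have : #|T| != j by apply: contraNneq hT => ->.
  by move/negbTE => ->; rewrite mul0r.
rewrite exchange_big /=; apply: eq_big_nat => j _.
rewrite -mulr_suml; congr (_ * _).
rewrite -cards_draws -sum1_card natr_sum [RHS]big_mkcond [LHS]big_mkcond /=.
apply: eq_bigr => T _; rewrite inE.
by case: (T \subset A); case: (#|T| == j).
Qed.

Lemma main_fin nb : forall Bs : {set B}, #|Bs| = nb -> forall (A : {set I}) (c : R),
  0 <= c -> c ^+ k = \sum_(b in Bs) w b ^+ k ->
  Ssum A Bs <= Vt R k #|A| c (\sum_(b in Bs) w b - c).
Proof.
elim: nb => [|nb IH] Bs hBs A c c0 hc.
  move/cards0_eq: hBs => hB; subst Bs; rewrite big_set0 in hc *.
  have -> : c = 0 by move/eqP: hc; rewrite expf_eq0 => /andP[_ /eqP].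
  apply: le_trans (base A) _.
  case: (#|A| =P 0%N) => [-> | hA] /=; first by rewrite big_set0 Vt000.
  by apply: Vt_ge0; rewrite ?big_set0 ?subrr.
have [b bBs] : exists b, b \in Bs by apply/set0Pn; rewrite -card_gt0 hBs.
set Bs' := Bs :\ b.
have hBs' : #|Bs'| = nb by move: hBs; rewrite (cardsD1 b Bs) bBs; case.
have EBs : Bs = b |: Bs' by rewrite finset.setD1K.
have bn : b \notin Bs' by rewrite !inE eqxx.
have Es : \sum_(i in Bs) w i = w b + \sum_(i in Bs') w i by rewrite (big_setD1 b bBs).
have Ek : \sum_(i in Bs) w i ^+ k = w b ^+ k + \sum_(i in Bs') w i ^+ k by rewrite (big_setD1 b bBs).
set s' := \sum_(i in Bs') w i.
set q' := \sum_(i in Bs') w i ^+ k.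
have q'0 : 0 <= q' by apply: sumr_ge0 => i _; apply: exprn_ge0.
have s'0 : 0 <= s' by apply: sumr_ge0 => i _.
set c1 := q' `^ (k%:R^-1).
have c10 : 0 <= c1 := powR_ge0 _ _.
have hc1 : c1 ^+ k = q' := rootK _ q'0.
have c1s : c1 <= s' by apply: (rootle _ _ k0) => //; rewrite hc1; apply: sum_pow_le.
rewrite Es {1}EBs step //.
apply: le_trans.
  apply: ler_sum => T hT; apply: ler_wpM2l; first exact: exprn_ge0.
  exact: (IH Bs' hBs' (A :\: T) c1 c10 hc1).
rewrite /=.
under eq_bigr => T /andP[TA _] do rewrite cardsD (finset.setIidPr TA).
rewrite (count_sub A (fun j => w b ^+ j * Vt R k (#|A| - j) c1 (s' - c1))).
under eq_big_nat => j _ do rewrite mulrA.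
have := @TB R k k0 #|A| (w b) c1 (s' - c1) c (w0 b) c10 ltac:(by rewrite subr_ge0) c0 ltac:(by rewrite hc Ek hc1).
have -> : w b + c1 - c + (s' - c1) = w b + s' - c by ring.
by [].
Qed.

End Comb.

Section Conn.
Variable R : realType.
Variables (p : nat -> R) (n k N : nat).
Hypothesis k0 : (0 < k)%N.
Hypothesis p0 : forall i, 0 <= p i.

Definition liftf (g : {ffun 'I_n -> 'I_N.+1}) : {ffun 'I_n -> nat} := [ffun j => val (g j)].
Definition wN (b : 'I_N.+1) : R := p b.
Let sN := series p N.+1.

Lemma wN0 b : 0 <= wN b. Proof. exact: p0. Qed.

Lemma liftf_inj : injective liftf.
Proof.
move=> g1 g2 h; apply/ffunP => j; apply: val_inj.
by have := congr1 (fun f : {ffun 'I_n -> nat} => f j) h; rewrite !ffunE.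
Qed.

Lemma mass_lift g : outcome_mass p (liftf g) = \prod_j wN (g j).
Proof. by rewrite /outcome_mass; apply: eq_bigr => j _; rewrite ffunE. Qed.

Lemma load_lift g (b : 'I_N.+1) : load (liftf g) (val b) = #|[set j | g j == b]%SET|.
Proof. rewrite /load; apply: eq_card => j; rewrite inE unfold_in /in_set /= asboolb ffunE; exact: (inj_eq val_inj). Qed.

Lemma ml_okl g : (maxload (liftf g) < k)%N = okl k _ _ finset.setT finset.setT g.
Proof.
rewrite /maxload /okl -(prednK k0) ltnS.
apply/bigmax_leqP/forall_inP => h.
  move=> b _; rewrite ltnS.
  case: (pickP (fun j => g j == b)) => [j /eqP gj | none].
    have := h j isT; rewrite ffunE load_lift gj.
    by congr (_ <= _)%N; apply: eq_card => j'; rewrite !inE.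
  rewrite (_ : [set j in finset.setT | g j == b] = finset.set0) ?cards0 //.
  by apply/setP => j; rewrite !inE none.
move=> j _; rewrite ffunE load_lift.
have := h (g j) (finset.in_setT _); rewrite ltnS.
by congr (_ <= _)%N; apply: eq_card => j'; rewrite !inE.
Qed.

Lemma sumw : \sum_(b : 'I_N.+1) wN b = sN.
Proof. by rewrite /sN /series /= -(big_mkord xpredT). Qed.

Lemma sumwk : \sum_(b : 'I_N.+1) wN b ^+ k = series (fun i => p i ^+ k) N.+1.
Proof. by rewrite /series /= -(big_mkord xpredT (fun i => p i ^+ k)). Qed.

Lemma sum_all : \sum_(g : {ffun 'I_n -> 'I_N.+1}) \prod_j wN (g j) = sN ^+ n.
Proof.
rewrite -(bigA_distr_bigA (fun (j : 'I_n) (b : 'I_N.+1) => wN b)) /=.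
by rewrite prodr_const card_ord sumw.
Qed.

Lemma lower_fin (c0 : R) : c0 = (series (fun i => p i ^+ k) N.+1) `^ (k%:R^-1) ->
  Ut R k n c0 (sN - c0) <=
  \sum_(g : {ffun 'I_n -> 'I_N.+1}) \prod_j wN (g j) * (k <= maxload (liftf g))%N%:R.
Proof.
move=> ->; set c := _ `^ _.
have q0 : 0 <= series (fun i => p i ^+ k) N.+1.
  by rewrite /series /=; apply: sumr_ge0 => i _; apply: exprn_ge0.
have hc : c ^+ k = \sum_(b in (finset.setT : {set 'I_N.+1})) wN b ^+ k.
  by rewrite (rootK _ _ k0 _ q0) -sumwk; apply: eq_bigl => b; rewrite inE.
have := @main_fin R k k0 'I_n 'I_N.+1 ord0 wN wN0 _ (finset.setT : {set 'I_N.+1}) erefl finset.setT c (powR_ge0 _ _) hc.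
have -> : \sum_(b in (finset.setT : {set 'I_N.+1})) wN b = sN by rewrite -sumw; apply: eq_bigl => b; rewrite inE.
rewrite cardsT card_ord => hS.
have E : \sum_(g : {ffun 'I_n -> 'I_N.+1}) \prod_j wN (g j) * (k <= maxload (liftf g))%N%:R
   = sN ^+ n - Ssum R k 'I_n 'I_N.+1 ord0 wN finset.setT finset.setT.
  have hv g : valid 'I_n 'I_N.+1 ord0 finset.setT finset.setT g.
    by apply/forallP => j; rewrite !finset.in_setT.
  rewrite -sum_all /Ssum [X in _ = _ - X](eq_bigl xpredT) //.
  rewrite -sumrB; apply: eq_bigr => g _.
  have -> : \prod_(j in finset.setT) wN (g j) = \prod_j wN (g j).
    by apply: eq_bigl => j; rewrite finset.in_setT.
  rewrite -ml_okl (leqNgt k); case: (maxload (liftf g) < k)%N => /=.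
    by rewrite mulr0 mulr1 subrr.
  by rewrite mulr0 subr0 mulr1.
rewrite E.
have := VU R k n c (sN - c); have -> : c + (sN - c) = sN by ring.
move=> hV; rewrite -hV.
have : Vt R k n c (sN - c) + Ut R k n c (sN - c) - Ssum R k 'I_n 'I_N.+1 ord0 wN finset.setT finset.setT
   = Ut R k n c (sN - c) + (Vt R k n c (sN - c) - Ssum R k 'I_n 'I_N.+1 ord0 wN finset.setT finset.setT) by ring.
move=> ->; rewrite lerDl subr_ge0 //.
Qed.

Lemma sum_pick (b : 'I_N.+1) : \sum_(b' : 'I_N.+1) wN b' * (b' == b)%:R = wN b.
Proof.
rewrite (bigD1 b) //= eqxx mulr1 big1 ?addr0 // => b' /negbTE ->; by rewrite mulr0.
Qed.

Lemma prod_ind (T : {set 'I_n}) (b : 'I_N.+1) :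
  \sum_(g : {ffun 'I_n -> 'I_N.+1}) \prod_j wN (g j) * (T \subset [set j | g j == b]%SET)%:R
  = wN b ^+ #|T| * sN ^+ (n - #|T|).
Proof.
have E g : \prod_j wN (g j) * (T \subset [set j | g j == b]%SET)%:R
    = \prod_j (wN (g j) * ((j \in T) ==> (g j == b))%:R).
  rewrite big_split /=; congr (_ * _).
  case: (boolP (T \subset [set j | g j == b]%SET)) => h.
    rewrite big1 // => j _.
    case: (boolP (j \in T)) => jT //=.
    by move: (fintype.subsetP h j jT); rewrite inE => ->.
  move/subsetPn: h => [j jT]; rewrite inE => gj.
  by rewrite (bigD1 j) //= jT /= (negbTE gj) mul0r.
under eq_bigr do rewrite E.
rewrite -(bigA_distr_bigA (fun (j : 'I_n) (b' : 'I_N.+1) => wN b' * ((j \in T) ==> (b' == b))%:R)) /=.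
rewrite (bigID (fun j => j \in T)) /=.
have -> : \prod_(i | i \in T) \sum_(b' : 'I_N.+1) wN b' * ((i \in T) ==> (b' == b))%:R
    = \prod_(i in T) wN b.
  by apply: eq_bigr => j jT; rewrite jT /= sum_pick.
have -> : \prod_(i | i \notin T) \sum_(b' : 'I_N.+1) wN b' * ((i \in T) ==> (b' == b))%:R
    = \prod_(i in [predC T]) sN.
  apply: eq_big => [j|j jT]; first by rewrite inE.
  rewrite (negbTE jT) /= -sumw; apply: eq_bigr => b' _; by rewrite mulr1.
rewrite !prodr_const; congr (_ * _ ^+ _).
have h := cardC T; rewrite card_ord in h.
have hT : (#|T| <= n)%N by rewrite -[X in (_ <= X)%N](card_ord n) max_card.
by apply/eqP; rewrite -(eqn_add2l #|T|) subnKC // h.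
Qed.

Lemma upper_fin : sN <= 1 ->
  \sum_(g : {ffun 'I_n -> 'I_N.+1}) \prod_j wN (g j) * (k <= maxload (liftf g))%N%:R
  <= ('C(n, k))%:R * series (fun i => p i ^+ k) N.+1.
Proof.
move=> hs1.
have sN0 : 0 <= sN by rewrite -sumw; apply: sumr_ge0 => b _; exact: wN0.
pose Z (g : {ffun 'I_n -> 'I_N.+1}) := \sum_(T : {set 'I_n} | #|T| == k)
   \sum_(b : 'I_N.+1) (T \subset [set j | g j == b]%SET)%:R : R.
have ind g : (k <= maxload (liftf g))%N%:R <= Z g.
  case h: (k <= maxload (liftf g))%N; last first.
    by rewrite /Z; apply: sumr_ge0 => T _; apply: sumr_ge0.
  have : ~~ okl k _ _ finset.setT finset.setT g by rewrite -ml_okl -leqNgt h.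
  move/forall_inPn => [b _]; rewrite -leqNgt => hb.
  set D := [set j | g j == b]%SET.
  have hD : (k <= #|D|)%N.
    by move: hb; congr (k <= _)%N; apply: eq_card => j; rewrite !inE.
  apply: (@le_trans _ _ (\sum_(T : {set 'I_n} | #|T| == k) (T \subset D)%:R)).
    have -> : \sum_(T : {set 'I_n} | #|T| == k) (T \subset D)%:R = ('C(#|D|, k))%:R :> R.
      rewrite -cards_draws -sum1_card natr_sum [RHS]big_mkcond [LHS]big_mkcond /=.
      apply: eq_bigr => T _; rewrite inE.
      by case: (T \subset D); case: (#|T| == k).
    by rewrite ler1n bin_gt0.
  apply: ler_sum => T _; rewrite (bigD1 b) //= lerDl; by apply: sumr_ge0 => ? _; apply: ler0n.
have H1 : \sum_(g : {ffun 'I_n -> 'I_N.+1}) \prod_j wN (g j) * (k <= maxload (liftf g))%N%:R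
   <= \sum_(g : {ffun 'I_n -> 'I_N.+1}) \prod_j wN (g j) * Z g.
  apply: ler_sum => g1 _; apply: ler_wpM2l (ind g1).
  by apply: prodr_ge0 => j _; exact: wN0.
apply: le_trans H1 _.
have -> : \sum_(g : {ffun 'I_n -> 'I_N.+1}) \prod_j wN (g j) * Z g =
   \sum_(T : {set 'I_n} | #|T| == k) \sum_(b : 'I_N.+1) wN b ^+ #|T| * sN ^+ (n - #|T|).
  transitivity (\sum_(g : {ffun 'I_n -> 'I_N.+1}) \sum_(T : {set 'I_n} | #|T| == k)
      \sum_(b : 'I_N.+1) \prod_j wN (g j) * (T \subset [set j | g j == b]%SET)%:R).
    apply: eq_bigr => g _; rewrite /Z mulr_sumr; apply: eq_bigr => T _; by rewrite mulr_sumr.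
  rewrite exchange_big; apply: eq_bigr => T _; rewrite exchange_big.
  by apply: eq_bigr => b _; rewrite prod_ind.
apply: (@le_trans _ _ (\sum_(T : {set 'I_n} | #|T| == k) \sum_(b : 'I_N.+1) wN b ^+ k)).
  apply: ler_sum => T /eqP hT; apply: ler_sum => b _; rewrite hT.
  apply: ler_piMr; first by apply: exprn_ge0; exact: wN0.
  by apply: exprn_ile1.
rewrite sumr_const sumwk -(mulr_natr (series (fun i => p i ^+ k) N.+1)) [X in X <= _]mulrC; apply: ler_wpM2r.
  by rewrite /series /=; apply: sumr_ge0 => i _; apply: exprn_ge0.
have := card_draws 'I_n k; rewrite card_ord => <-.
by rewrite ler_nat; apply: eq_leq; apply: eq_card => T; rewrite inE.
Qed.

End Conn.


Lemma fsbig_fin (R : realType) (T : finType) (D : set T) (f : T -> R) :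
  (\sum_(x \in D) (f x)%:E)%R = (\sum_(x : T) f x * (x \in D)%:R)%:E.
Proof.
rewrite fsbig_mkcond (fsbigE (enum T)); last 3 first.
- exact: enum_uniq.
- by [].
- by move=> i _; rewrite mem_enum.
rewrite -sumEFin big_enum_cond /=.
apply: eq_big => [i|i _]; first by rewrite in_setT.
by rewrite /patch; case: ifP => _; rewrite ?mulr1 ?mulr0.
Qed.

Section Final.
Variable R : realType.
Variables (p : nat -> R) (n k : nat).
Hypothesis p0 : forall i, 0 <= p i.
Hypothesis hs : series p @ \oo --> (1 : R).
Hypothesis k0 : (0 < k)%N.

Lemma ser_nd : {homo series p : a b / (a <= b)%N >-> a <= b}.
Proof. by apply: nondecreasing_series => i _ _; exact: p0. Qed.

Lemma ser_le1 N : series p N <= 1.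
Proof.
have := nondecreasing_cvgn_le ser_nd (cvgP _ hs) N.
by rewrite (cvg_lim _ hs).
Qed.

Lemma pk_le i : p i ^+ k <= p i.
Proof.
have p1 : p i <= 1.
  have := ser_le1 i.+1; rewrite /series /= big_nat_recr //= => h; apply: le_trans h.
  by rewrite lerDr; apply: sumr_ge0 => j _; exact: p0.
case: k k0 => // k' _; rewrite exprS -[X in _ <= X]mulr1; apply: ler_wpM2l => //.
exact: exprn_ile1.
Qed.

Let pk := fun i => p i ^+ k.

Lemma serk_nd : {homo series pk : a b / (a <= b)%N >-> a <= b}.
Proof. by apply: nondecreasing_series => i _ _; apply: exprn_ge0. Qed.

Lemma serk_le1 N : series pk N <= 1.
Proof.
apply: le_trans (ser_le1 N); rewrite /series /=; apply: ler_sum_nat => i _; exact: pk_le.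
Qed.

Lemma serk_cvg : cvgn (series pk).
Proof.
apply: nondecreasing_is_cvgn; first exact: serk_nd.
by exists 1 => _ [N _ <-]; exact: serk_le1.
Qed.

Let L := limn (series pk).

Lemma serk_leL N : series pk N <= L.
Proof. exact: nondecreasing_cvgn_le serk_nd serk_cvg N. Qed.

Lemma L_ge0 : 0 <= L.
Proof. by apply: le_trans (serk_leL 0); rewrite /series /= big_geq. Qed.

Lemma pnormE : pnorm p k = L `^ (k%:R^-1).
Proof. by []. Qed.

Lemma pnormX : pnorm p k ^+ k = L.
Proof. by rewrite pnormE rootK // L_ge0. Qed.

Lemma L_gt0 : infinite_set [set i | 0 < p i] -> 0 < L.
Proof.
move=> hinf; have [i /= pi] := infinite_setN0 hinf.
apply: lt_le_trans (serk_leL i.+1); rewrite /series /= big_nat_recr //=.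
rewrite -[X in X < _]add0r; apply: ler_ltD; first by apply: sumr_ge0 => j _; apply: exprn_ge0.
by rewrite /pk exprn_gt0.
Qed.

Lemma cvg_pow (f : nat -> R) (a : R) m : f @ \oo --> a -> (fun N => f N ^+ m) @ \oo --> a ^+ m.
Proof. move=> hf; exact: (@continuous_cvg _ _ _ _ _ f (fun x : R => x ^+ m) a (@exprn_continuous R m a) hf). Qed.

Lemma s_cvg : (fun N => series p N.+1) @ \oo --> (1 : R).
Proof. by rewrite cvg_shiftS. Qed.

Lemma c_cvg : 0 < L -> (fun N => series pk N.+1 `^ (k%:R^-1)) @ \oo --> pnorm p k.
Proof.
move=> hL; rewrite pnormE.
have h1 : (fun N => series pk N.+1) @ \oo --> L by rewrite cvg_shiftS; exact: serk_cvg.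
have hc : {for L, continuous (fun x : R => x `^ (k%:R^-1))}.
  apply: differentiable_continuous; apply/derivable1_diffP; apply: derivable_powR.
  by rewrite in_itv /= andbT.
exact: (@continuous_cvg _ _ _ _ _ (fun N => series pk N.+1) (fun x : R => x `^ (k%:R^-1)) L hc h1).
Qed.

Lemma u_cvg : 0 < L ->
  (fun N => Ut R k n (series pk N.+1 `^ (k%:R^-1))
      (series p N.+1 - series pk N.+1 `^ (k%:R^-1))) @ \oo --> binom_tail_ge n (pnorm p k) k.
Proof.
move=> hL; rewrite /Ut /binom_tail_ge; apply: cvg_big => [|j _].
  exact: add_continuous.
apply: cvgM; first apply: cvgM; first exact: cvg_cst.
  exact: cvg_pow (c_cvg hL).
apply: cvg_pow; apply: cvgB; [exact: s_cvg | exact: c_cvg hL].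
Qed.

Lemma mass_ge0 (f : {ffun 'I_n -> nat}) : 0 <= outcome_mass p f.
Proof. by apply: prodr_ge0 => j _; exact: p0. Qed.

Lemma memP_bool (T : Type) (P : T -> bool) x : (x \in [set y | P y]) = P x.
Proof. by rewrite unfold_in /in_set /= asboolb. Qed.

Lemma upper_esum :
  (prob_maxload_ge p n k <= ('C(n, k)%:R * pnorm p k ^+ k)%:E)%E.
Proof.
rewrite pnormX /prob_maxload_ge /esum; apply: ge_ereal_sup => _ [X [finX XS] <-].
have [s Xs] := (finite_seqP X).1 finX.
set N := \max_(x <- s) \max_(j : 'I_n) x j.
set P := [set g : {ffun 'I_n -> 'I_N.+1} | (k <= maxload (liftf n N g))%N].
have sub : {subset X <= liftf n N @` P}.
  move=> x; rewrite Xs => xs; rewrite mem_setE in xs.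
  have hx j : (x j <= N)%N.
    apply: leq_trans (leq_bigmax j) _.
    exact: (leq_bigmax_seq (F := fun y : {ffun 'I_n -> nat} => \max_(j : 'I_n) y j) x xs isT).
  have E : liftf n N [ffun j => inord (x j)] = x.
    by apply/ffunP => j; rewrite !ffunE /= inordK // ltnS hx.
  rewrite in_setE; exists [ffun j => inord (x j)] => //.
  rewrite /P /= E; apply: XS; by rewrite Xs.
have fin2 : finite_set (liftf n N @` P) by exact: finite_image.
have H := @lee_fsum_nneg_subset R _ _ _ (fun x => (outcome_mass p x)%:E) finX fin2 sub.
apply: le_trans (H _) _; first by move=> x _; rewrite lee_fin; exact: mass_ge0.
rewrite fsbig_image; last by move=> x y _ _; apply: liftf_inj.
rewrite (@fsbig_fin R _ _ (fun g => outcome_mass p (liftf n N g))) lee_fin.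
have -> : \sum_(g : {ffun 'I_n -> 'I_N.+1}) outcome_mass p (liftf n N g) * (g \in P)%:R
   = \sum_(g : {ffun 'I_n -> 'I_N.+1}) \prod_j wN R p N (g j) * (k <= maxload (liftf n N g))%N%:R.
  by apply: eq_bigr => g _; rewrite mass_lift /P memP_bool.
apply: le_trans (upper_fin _ _ _ _ _ k0 p0 (ser_le1 _)) _.
by apply: ler_wpM2l => //; exact: serk_leL.
Qed.

Lemma lower_N N :
  ((Ut R k n (series pk N.+1 `^ (k%:R^-1))
      (series p N.+1 - series pk N.+1 `^ (k%:R^-1)))%:E <= prob_maxload_ge p n k)%E.
Proof.
set P := [set g : {ffun 'I_n -> 'I_N.+1} | (k <= maxload (liftf n N g))%N].
apply: esum_ge; exists (liftf n N @` P).
  split; first exact: finite_image.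
  by move=> _ [g Pg <-].
rewrite fsbig_image; last by move=> x y _ _; apply: liftf_inj.
rewrite (@fsbig_fin R _ _ (fun g => outcome_mass p (liftf n N g))) lee_fin.
have -> : \sum_(g : {ffun 'I_n -> 'I_N.+1}) outcome_mass p (liftf n N g) * (g \in P)%:R
   = \sum_(g : {ffun 'I_n -> 'I_N.+1}) \prod_j wN R p N (g j) * (k <= maxload (liftf n N g))%N%:R.
  by apply: eq_bigr => g _; rewrite mass_lift /P memP_bool.
exact: (lower_fin _ _ _ _ _ k0 p0 _ erefl).
Qed.

Lemma lower_esum : infinite_set [set i | 0 < p i] ->
  ((binom_tail_ge n (pnorm p k) k)%:E <= prob_maxload_ge p n k)%E.
Proof.
move=> hinf; have hL := L_gt0 hinf; have cu := u_cvg hL.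
have ge0 : (0 <= prob_maxload_ge p n k)%E.
  by apply: esum_ge0 => x _; rewrite lee_fin; exact: mass_ge0.
case E: (prob_maxload_ge p n k) => [r| |]; last by rewrite E in ge0.
  rewrite lee_fin -(cvg_lim _ cu) //; apply: limr_le; first exact: cvgP cu.
  by apply: nearW => N; have := lower_N N; rewrite E lee_fin.
exact: leey.
Qed.

End Final.


Theorem mainTheorem11 (R : realType) (p : nat -> R) (n k : nat) :
  (forall i, 0 <= p i) ->
  series p @ \oo --> (1 : R) ->
  infinite_set [set i | 0 < p i] ->
  (1 <= k)%N ->
  ((binom_tail_ge n (pnorm p k) k)%:E <= prob_maxload_ge p n k)%E /\
  (prob_maxload_ge p n k <= ('C(n, k)%:R * pnorm p k ^+ k)%:E)%E.
Proof.
move=> p0 hs hinf k1; split.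
  exact: (lower_esum _ _ _ _ p0 hs k1 hinf).
exact: (upper_esum _ _ _ _ p0 hs k1).
Qed.
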